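(* Let $M$ and $M'$ be two stable matchings in an instance $I$ of SPA-S. If some student $s_i$ is assigned in $M$ and in $M'$ to different projects offered by the same lecturer $l_k$, and $s_i$ prefers $M$ to $M'$, then $l_k$ prefers $s_i$ to some student $s_z\in M(l_k)\setminus M'(l_k)$.
   Context: An instance $I$ of SPA-S consists of a finite set $\mathcal{S}$ of students, a finite set $\mathcal{P}$ of projects and a finite set $\mathcal{L}$ of lecturers. Each student $s_i$ ranks a subset $A_i\subseteq\mathcal{P}$ (its acceptable projects) in strict order. Each project is offered by exactly one lecturer; lecturer $l_k$ offers a nonempty set $P_k\subseteq\mathcal{P}$, the $P_k$ partitioning $\mathcal{P}$. Each lecturer $l_k$ ranks in strict order the students who find at least one project of $P_k$ acceptable. Projects have capacities $c_j\in\mathbb{Z}^+$, lecturers have capacities $d_k\in\mathbb{Z}^+$ with $\max\{c_j:p_j\in P_k\}\le d_k\le\sum\{c_j:p_j\in P_k\}$. A pair $(s_i,p_j)$, $p_j$ offered by $l_k$, is acceptable if $p_j\in A_i$ and $s_i$ is on $l_k$'s list. A matching $M$ is a set of acceptable pairs with each student in at most one pair, $|M(p_j)|\le c_j$, $|M(l_k)|\le d_k$, where $M(s_i)$, $M(p_j)$, $M(l_k)$ denote the project of $s_i$, the students assigned to $p_j$, and the students assigned to projects of $l_k$. Undersubscribed/full means fewer than/exactly capacity many assigned students. An acceptable pair $(s_i,p_j)\notin M$ ($p_j$ offered by $l_k$) blocks $M$ if ($s_i$ is unassigned or prefers $p_j$ to $M(s_i)$) and one of: (P1) $p_j$ and $l_k$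 undersubscribed; (P2) $p_j$ undersubscribed, $l_k$ full, $s_i\in M(l_k)$; (P3) $p_j$ undersubscribed, $l_k$ full, $l_k$ prefers $s_i$ to the worst student of $M(l_k)$; (P4) $p_j$ full and $l_k$ prefers $s_i$ to the worst student of $M(p_j)$. $M$ is stable if it has no blocking pair. A student $s$ prefers $M$ to $M'$ if $s$ is assigned in both and prefers $M(s)$ to $M'(s)$. *)

(* Defs.v *)
From mathcomp Require Import all_boot.
Set Implicit Arguments. Unset Strict Implicit. Unset Printing Implicit Defensive.

Record spa_instance (S P L : finType) := SpaInstance {
  spref : S -> seq P;            (* student's preference list = acceptable projects, in order *)
  lpref : L -> seq S;
  lec : P -> L;
  pcap : P -> nat;
  lcap : L -> nat;
  spref_uniq : forall s, uniq (spref s);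
  lpref_uniq : forall l, uniq (lpref l);
  lpref_def : forall l s, (s \in lpref l) = has (fun p => lec p == l) (spref s);
  lec_nonempty : forall l, exists p, lec p = l;
  pcap_pos : forall p, 0 < pcap p;
  lcap_max : forall l p, lec p = l -> pcap p <= lcap l;
  lcap_sum : forall l, lcap l <= \sum_(p | lec p == l) pcap p
}.

Section Defs.
Variables (S P L : finType) (I : spa_instance S P L).

Definition sprefers (s : S) (p q : P) : bool :=
  [&& p \in spref I s, q \in spref I s & index p (spref I s) < index q (spref I s)].

Definition lprefers (l : L) (s t : S) : bool :=
  [&& s \in lpref I l, t \in lpref I l & index s (lpref I l) < index t (lpref I l)].

Definition acceptable (s : S) (p : P) : bool :=
  (p \in spref I s) && (s \in lpref I (lec I p)).

Definition Mp (M : {set S * P}) (p : P) : {set S} := [set s | (s, p) \in M].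
Definition Ml (M : {set S * P}) (l : L) : {set S} :=
  [set s | [exists p, (lec I p == l) && ((s, p) \in M)]].

Definition is_matching (M : {set S * P}) : Prop :=
  [/\ forall s p, (s, p) \in M -> acceptable s p,
      forall s p q, (s, p) \in M -> (s, q) \in M -> p = q,
      forall p, #|Mp M p| <= pcap I p
    & forall l, #|Ml M l| <= lcap I l].

Definition assigned (M : {set S * P}) (s : S) : Prop := exists p, (s, p) \in M.

Definition prefers_to_worst (l : L) (s : S) (A : {set S}) : Prop :=
  exists2 w, w \in A &
    (forall u, u \in A -> u = w \/ lprefers l u w) /\ lprefers l s w.

Definition blocking (M : {set S * P}) (s : S) (p : P) : Prop :=
  let l := lec I p in
  [/\ acceptable s p, (s, p) \notin M,
      (~ assigned M s \/ forall q, (s, q) \in M -> sprefers s p q)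
    & [\/ (#|Mp M p| < pcap I p /\ #|Ml M l| < lcap I l),
          [/\ #|Mp M p| < pcap I p, #|Ml M l| = lcap I l & s \in Ml M l],
          [/\ #|Mp M p| < pcap I p, #|Ml M l| = lcap I l & prefers_to_worst l s (Ml M l)]
        | #|Mp M p| = pcap I p /\ prefers_to_worst l s (Mp M p)]].

Definition stable (M : {set S * P}) : Prop :=
  is_matching M /\ forall s p, ~ blocking M s p.

End Defs.

(* Main.v *)
Require Import Defs.
From mathcomp Require Import all_boot.
From mathcomp Require Import zify.
From Stdlib Require Import Classical.

Set Implicit Arguments. Unset Strict Implicit. Unset Printing Implicit Defensive.

Section Aux.
Variables (S P L : finType) (I : spa_instance S P L).

Lemma pr_asym (T : eqType) (sq : seq T) a b :
  [&& a \in sq, b \in sq & index a sq < index b sq] ->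
  [&& b \in sq, a \in sq & index b sq < index a sq] -> False.
Proof. move=> /and3P[_ _ h1] /and3P[_ _ h2]; lia. Qed.

Lemma pr_trans (T : eqType) (sq : seq T) a b c :
  [&& a \in sq, b \in sq & index a sq < index b sq] ->
  [&& b \in sq, c \in sq & index b sq < index c sq] ->
  [&& a \in sq, c \in sq & index a sq < index c sq].
Proof. move=> /and3P[-> _ h1] /and3P[_ -> h2] /=; lia. Qed.

Lemma pr_total (T : eqType) (sq : seq T) a b :
  a \in sq -> b \in sq -> a != b ->
  [&& a \in sq, b \in sq & index a sq < index b sq] \/
  [&& b \in sq, a \in sq & index b sq < index a sq].
Proof.
move=> ha hb hab; rewrite ha hb /=.
case: (ltngtP (index a sq) (index b sq)) => h; [by left|by right|].
by move/eqP: hab => hab; exfalso; apply: hab; exact: (@index_inj _ a sq a b ha hb h).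
Qed.

Lemma lpr_asym l a b : lprefers I l a b -> lprefers I l b a -> False.
Proof. exact: pr_asym. Qed.
Lemma lpr_trans l a b c : lprefers I l a b -> lprefers I l b c -> lprefers I l a c.
Proof. exact: pr_trans. Qed.
Lemma lpr_total l a b : a \in lpref I l -> b \in lpref I l -> a != b ->
  lprefers I l a b \/ lprefers I l b a.
Proof. exact: pr_total. Qed.
Lemma lpr_irr l a : ~~ lprefers I l a a.
Proof. by rewrite /lprefers ltnn !andbF. Qed.
Lemma spr_asym s a b : sprefers I s a b -> sprefers I s b a -> False.
Proof. exact: pr_asym. Qed.
Lemma spr_total s a b : a \in spref I s -> b \in spref I s -> a != b ->
  sprefers I s a b \/ sprefers I s b a.
Proof. exact: pr_total. Qed.
Lemma spr_irr s a : ~~ sprefers I s a a.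
Proof. by rewrite /sprefers ltnn !andbF. Qed.

Section St.
Variable Z : {set S * P}.
Hypothesis sZ : stable I Z.

Lemma st_acc x q : (x, q) \in Z -> acceptable I x q.
Proof. by case: sZ => [[h _ _ _] _]; apply: h. Qed.
Lemma st_uniq x p q : (x, p) \in Z -> (x, q) \in Z -> p = q.
Proof. by case: sZ => [[_ h _ _] _]; apply: h. Qed.
Lemma st_pcap p : #|Mp Z p| <= pcap I p.
Proof. by case: sZ => [[_ _ h _] _]; apply: h. Qed.
Lemma st_lcap l : #|Ml I Z l| <= lcap I l.
Proof. by case: sZ => [[_ _ _ h] _]; apply: h. Qed.
Lemma st_nb x p : ~ blocking I Z x p.
Proof. by case: sZ => _ h; apply: h. Qed.

Lemma st_spref x q : (x, q) \in Z -> q \in spref I x.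
Proof. by move/st_acc/andP=> []. Qed.
Lemma st_lpref x q : (x, q) \in Z -> x \in lpref I (lec I q).
Proof. by move/st_acc/andP=> []. Qed.

Lemma Ml_in x q l : (x, q) \in Z -> lec I q = l -> x \in Ml I Z l.
Proof. by move=> h e; rewrite inE; apply/existsP; exists q; rewrite e eqxx h. Qed.

Lemma Ml_lpref l : {subset Ml I Z l <= lpref I l}.
Proof.
move=> w; rewrite inE => /existsP[q /andP[/eqP e h]].
by rewrite -e; apply: st_lpref h.
Qed.
Lemma Mp_lpref r : {subset Mp Z r <= lpref I (lec I r)}.
Proof. by move=> w; rewrite inE; apply: st_lpref. Qed.
End St.

Lemma worst (l : L) (A : {set S}) a0 : a0 \in A -> {subset A <= lpref I l} ->
  exists2 w, w \in A & forall u, u \in A -> u = w \/ lprefers I l u w.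
Proof.
move=> a0A sub.
case: (@arg_maxnP _ a0 (fun x => x \in A) (fun w => index w (lpref I l)) a0A)
  => w wA wmax.
exists w => // u uA; case: (eqVneq u w) => [->|uw]; [by left|right].
have hle : index u (lpref I l) <= index w (lpref I l) := wmax _ uA.
rewrite /lprefers (sub _ uA) (sub _ wA) /= ltn_neqAle hle andbT.
apply: contra uw => /eqP h; apply/eqP; exact: (@index_inj _ u _ u w (sub _ uA) (sub _ wA) h).
Qed.

Lemma notptw l v (A : {set S}) : A != set0 -> {subset A <= lpref I l} ->
  v \notin A -> v \in lpref I l -> ~ prefers_to_worst I l v A ->
  forall w, w \in A -> lprefers I l w v.
Proof.
move=> /set0Pn[a0 a0A] sub vA vl nptw.
have [w0 w0A w0w] := worst a0A sub.
have h0 : lprefers I l w0 v.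
  have nv : v != w0 by apply: contraNneq vA => ->.
  case: (lpr_total vl (sub _ w0A) nv) => // h.
  by exfalso; apply: nptw; exists w0.
move=> w wA; case: (w0w _ wA) => [->//|h]; exact: lpr_trans h h0.
Qed.

Lemma noblock Z v r : stable I Z -> acceptable I v r -> (v, r) \notin Z ->
  (forall q, (v, q) \in Z -> sprefers I v r q) ->
  (#|Mp Z r| = pcap I r /\ forall w, w \in Mp Z r -> lprefers I (lec I r) w v) \/
  [/\ #|Ml I Z (lec I r)| = lcap I (lec I r), v \notin Ml I Z (lec I r)
    & forall w, w \in Ml I Z (lec I r) -> lprefers I (lec I r) w v].
Proof.
move=> sZ acc nin pref.
have nb : ~ blocking I Z v r := @st_nb Z sZ v r.
have vl : v \in lpref I (lec I r) by case/andP: acc.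
have pp := @pcap_pos _ _ _ I r.
have pl := @lcap_max _ _ _ I _ _ (erefl (lec I r)).
case: (ltngtP #|Mp Z r| (pcap I r)) => [lt|gt|eq].
- right.
  case: (ltngtP #|Ml I Z (lec I r)| (lcap I (lec I r))) => [lt2|gt2|eq2].
  + by exfalso; apply: nb; split => //; [right|apply: Or41].
  + by have := st_lcap sZ (lec I r); lia.
  + case: (boolP (v \in Ml I Z (lec I r))) => vin.
      by exfalso; apply: nb; split => //; [right|apply: Or42].
    split => //; apply: notptw => //.
    * by rewrite -card_gt0; lia.
    * exact: Ml_lpref.
    * by move=> h; apply: nb; split => //; [right|apply: Or43].
- by have := st_pcap sZ r; lia.
- left; split => //; apply: notptw => //.
  + by rewrite -card_gt0; lia.
  + exact: Mp_lpref.
  + by rewrite inE.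
  + by move=> h; apply: nb; split => //; [right|apply: Or44].
Qed.

End Aux.

Section Aux2.
Variables (S P L : finType) (I : spa_instance S P L).

Definition gain (Y X : {set S * P}) (x : S) : bool :=
  [exists q, ((x, q) \in Y) && [forall q', ((x, q') \in X) ==> sprefers I x q q']].

Lemma gain_pref Y X x q : stable I Y -> gain Y X x -> (x, q) \in Y ->
  forall q', (x, q') \in X -> sprefers I x q q'.
Proof.
move=> sY /existsP[q0 /andP[h0 /forallP hf]] hq q' hq'.
rewrite (st_uniq sY hq h0); exact: (implyP (hf q')).
Qed.

Lemma gain_notin Y X x q : stable I Y -> gain Y X x -> (x, q) \in Y -> (x, q) \notin X.
Proof.
move=> sY g hq; apply/negP => hq'.
by have := gain_pref sY g hq hq'; rewrite (negbTE (spr_irr _ _ _)).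
Qed.

Lemma gain_disj M N x : stable I M -> stable I N -> gain M N x -> gain N M x -> False.
Proof.
move=> sM sN g1 g2.
case/existsP: (g1) => q /andP[hq _]; case/existsP: (g2) => q' /andP[hq' _].
exact: spr_asym (gain_pref sM g1 hq hq') (gain_pref sN g2 hq' hq).
Qed.

Lemma gain_Ml Y X x : gain Y X x -> exists m, x \in Ml I Y m.
Proof.
case/existsP=> q /andP[hq _]; exists (lec I q); rewrite inE.
by apply/existsP; exists q; rewrite eqxx hq.
Qed.

Lemma flip M N x q : stable I M -> stable I N -> (x, q) \in N -> (x, q) \notin M ->
  ~~ gain N M x -> gain M N x.
Proof.
move=> sM sN hN hM ng.
have : ~~ [forall q', ((x, q') \in M) ==> sprefers I x q q'].
  by apply: contra ng => h; apply/existsP; exists q; rewrite hN.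
case/forallPn => q'; rewrite negb_imply => /andP[hq' nsp].
apply/existsP; exists q'; rewrite hq' /=; apply/forallP => q''; apply/implyP => hq''.
rewrite (st_uniq sN hq'' hN).
have nq : q' != q by apply: contraNneq hM => <-.
case: (spr_total (st_spref sM hq') (st_spref sN hN) nq) => // h.
by rewrite h in nsp.
Qed.

Lemma flip' Y X v r : stable I Y -> stable I X -> (v, r) \in X -> (v, r) \notin Y ->
  ~~ gain Y X v -> forall q, (v, q) \in Y -> sprefers I v r q.
Proof.
move=> sY sX hX hY ng q hq.
have : ~~ [forall q', ((v, q') \in X) ==> sprefers I v q q'].
  by apply: contra ng => h; apply/existsP; exists q; rewrite hq.
case/forallPn => q'; rewrite negb_imply => /andP[hq' nsp].
rewrite (st_uniq sX hq' hX) in nsp.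
have nq : r != q by apply: contraNneq hY => ->.
case: (spr_total (st_spref sX hX) (st_spref sY hq) nq) => // h.
by rewrite h in nsp.
Qed.

Lemma proj Y X r u (H : pred S) : stable I Y -> stable I X -> (u, r) \in Y ->
  #|Mp X r| = pcap I r -> (forall w, w \in Mp X r -> lprefers I (lec I r) w u) ->
  (forall w, w \in Mp X r -> H w) ->
  #|[set x | ((x, r) \in Y) && gain Y X x]| <=
  #|[set x | ((x, r) \in X) && gain Y X x && H x]|.
Proof.
move=> sY sX hu full pref hH.
have s1 : [set x | ((x, r) \in Y) && gain Y X x] \subset Mp Y r :\: Mp X r.
  apply/subsetP => x; rewrite !inE => /andP[hx g]; rewrite hx andbT.
  exact: gain_notin sY g hx.
have s2 : #|Mp Y r :\: Mp X r| <= #|Mp X r :\: Mp Y r|.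
  rewrite !cardsD setIC; have := st_pcap sY r; have := subset_leq_card (subsetIl (Mp X r) (Mp Y r)); lia.
have s3 : Mp X r :\: Mp Y r \subset [set x | ((x, r) \in X) && gain Y X x && H x].
  apply/subsetP => v; rewrite !inE => /andP[nY hX].
  have vX : v \in Mp X r by rewrite inE.
  rewrite hX (hH _ vX) andbT /=.
  case: (boolP (gain Y X v)) => // ng.
  have pv := pref _ vX.
  have uY : u \in Mp Y r by rewrite inE.
  case: (noblock sY (st_acc sX hX) nY (flip' sY sX hX nY ng)) => [[_ h]|[_ _ h]].
  - by exfalso; exact: lpr_asym pv (h _ uY).
  - by exfalso; exact: lpr_asym pv (h _ (Ml_in hu erefl)).
apply: leq_trans (subset_leq_card s1) _; apply: leq_trans s2 _; exact: subset_leq_card s3.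
Qed.

End Aux2.

Lemma dc (T U : finType) (A : pred T) (R : T -> U -> bool) :
  (forall x r1 r2, R x r1 -> R x r2 -> r1 = r2) ->
  \sum_r #|[set x | A x && R x r]| = #|[set x | A x && [exists r, R x r]]|.
Proof.
move=> Hu.
under eq_bigr => r _ do rewrite -sum1_card big_mkcond /=.
rewrite exchange_big /= -sum1_card [RHS]big_mkcond /=.
apply: eq_bigr => x _; rewrite inE.
case: (boolP [exists r, R x r]) => [/existsP[r0 h0]|/existsPn hn].
- rewrite (bigD1 r0) //= inE h0 andbT big1 ?addn0 //.
  move=> r nr; rewrite inE; case: (boolP (R x r)) => hr; last by rewrite andbF.
  by rewrite (Hu _ _ _ hr h0) eqxx in nr.
- rewrite andbF big1 // => r _; by rewrite inE (negbTE (hn r)) andbF.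
Qed.

Section Aux3.
Variables (S P L : finType) (I : spa_instance S P L).

Lemma Ml_proj Z (Q : pred S) m : stable I Z ->
  #|[set x | Q x && (x \in Ml I Z m)]| =
  \sum_r #|[set x | Q x && ((lec I r == m) && ((x, r) \in Z))]|.
Proof.
move=> sZ; rewrite dc.
  by apply: eq_card => x; rewrite !inE.
move=> x r1 r2 /andP[_ h1] /andP[_ h2]; exact: (st_uniq sZ h1 h2).
Qed.

Lemma Ml_sum Z (Q : pred S) : stable I Z ->
  \sum_m #|[set x | Q x && (x \in Ml I Z m)]| =
  #|[set x | Q x && [exists m, x \in Ml I Z m]]|.
Proof.
move=> sZ; apply: dc => x m1 m2; rewrite !inE.
move=> /existsP[q1 /andP[/eqP e1 h1]] /existsP[q2 /andP[/eqP e2 h2]].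
by rewrite -e1 -e2 (st_uniq sZ h1 h2).
Qed.

Lemma Ml_sum_le Z (Q : pred S) : stable I Z ->
  \sum_m #|[set x | Q x && (x \in Ml I Z m)]| <= #|[set x | Q x]|.
Proof.
move=> sZ; rewrite Ml_sum //; apply: subset_leq_card; apply/subsetP => x.
by rewrite !inE => /andP[].
Qed.

Lemma Ml_sum_eq Z (Q : pred S) : stable I Z ->
  (forall x, Q x -> exists m, x \in Ml I Z m) ->
  \sum_m #|[set x | Q x && (x \in Ml I Z m)]| = #|[set x | Q x]|.
Proof.
move=> sZ hQ; rewrite Ml_sum //; apply: eq_card => x; rewrite !inE.
case: (boolP (Q x)) => //= qx; have [m hm] := hQ _ qx.
by apply/existsP; exists m.
Qed.

Lemma LecP Y X m (H : pred S) : stable I Y -> stable I X ->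
  (forall x w, H x -> lprefers I m w x -> H w) ->
  (forall u r, (u, r) \in Y -> lec I r = m -> gain I Y X u -> H u ->
     #|Mp X r| = pcap I r /\ forall w, w \in Mp X r -> lprefers I m w u) ->
  forall r,
  #|[set x | gain I Y X x && H x && ((lec I r == m) && ((x, r) \in Y))]| <=
  #|[set x | gain I Y X x && H x && ((lec I r == m) && ((x, r) \in X))]|.
Proof.
move=> sY sX Hup pre r.
move Ae: [set x | gain I Y X x && H x && ((lec I r == m) && ((x, r) \in Y))] => A.
have [er|ner] := eqVneq (lec I r) m; last first.
  have -> : A = set0.
    by apply/setP => x; rewrite -Ae !inE (negbTE ner) andbF.
  by rewrite cards0.
case: (set_0Vmem A) => [->|[u]]; first by rewrite cards0.
rewrite -Ae inE er eqxx /= => /andP[/andP[gu hu] uY].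
have [full pref] := pre _ _ uY er gu hu.
have hH : forall w, w \in Mp X r -> H w by move=> w /pref; apply: Hup.
rewrite -er in pref.
have := proj sY sX uY full pref hH.
move=> hp; apply: leq_trans (leq_trans _ hp) _.
  apply: subset_leq_card; apply/subsetP => x; rewrite !inE.
  by case/andP => /andP[-> _] ->.
apply: subset_leq_card; apply/subsetP => x; rewrite !inE.
by case/andP => /andP[-> ->] ->.
Qed.

Lemma LecS Y X m (H : pred S) : stable I Y -> stable I X ->
  (forall x w, H x -> lprefers I m w x -> H w) ->
  (forall u r, (u, r) \in Y -> lec I r = m -> gain I Y X u -> H u ->
     #|Mp X r| = pcap I r /\ forall w, w \in Mp X r -> lprefers I m w u) ->
  #|[set x | gain I Y X x && H x && (x \in Ml I Y m)]| <=
  #|[set x | gain I Y X x && H x && (x \in Ml I X m)]|.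
Proof.
move=> sY sX Hup pre.
rewrite (Ml_proj (fun x => gain I Y X x && H x)) // (Ml_proj (fun x => gain I Y X x && H x)) //.
apply: leq_sum => r _; exact: LecP.
Qed.

Lemma cardT (Q A : pred S) :
  #|[set x | Q x && predT x && A x]| = #|[set x | Q x && A x]|.
Proof. by apply: eq_card => x; rewrite !inE andbT. Qed.

Definition Bp (M N : {set S * P}) m : Prop :=
  exists u, [/\ gain I N M u, u \in Ml I N m, #|Ml I M m| = lcap I m,
                u \notin Ml I M m & forall w, w \in Ml I M m -> lprefers I m w u].

Lemma Bp_excl M N m : Bp M N m -> Bp N M m -> False.
Proof.
move=> [u [_ uN _ _ hu]] [t [_ tM _ _ ht]].
exact: lpr_asym (ht _ uN) (hu _ tM).
Qed.

Lemma preA M N m : stable I M -> stable I N -> ~ Bp M N m ->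
  forall u r, (u, r) \in N -> lec I r = m -> gain I N M u ->
  #|Mp M r| = pcap I r /\ forall w, w \in Mp M r -> lprefers I m w u.
Proof.
move=> sM sN nB u r uN er g.
case: (noblock sM (st_acc sN uN) (gain_notin sN g uN) (gain_pref sN g uN)).
  by rewrite er.
rewrite er => -[h1 h2 h3]; exfalso; apply: nB; exists u; split => //.
exact: Ml_in uN er.
Qed.

Definition Zs (M N : {set S * P}) m :=
  [set x | [exists q, (lec I q == m) && ((x, q) \in M) && ((x, q) \in N)]].

Lemma part_le M N m : stable I M -> stable I N ->
  #|Ml I N m| <= #|[set x | gain I M N x && (x \in Ml I N m)]|
                + #|[set x | gain I N M x && (x \in Ml I N m)]| + #|Zs M N m|.
Proof.
move=> sM sN.
have sub : Ml I N m \subset ([set x | gain I M N x && (x \in Ml I N m)]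
              :|: [set x | gain I N M x && (x \in Ml I N m)]) :|: Zs M N m.
  apply/subsetP => x xN; have := xN; rewrite inE => /existsP[q /andP[/eqP e hq]].
  case: (boolP ((x, q) \in M)) => hM.
    by apply/setUP; right; rewrite inE; apply/existsP; exists q; rewrite e eqxx hM hq.
  apply/setUP; left; apply/setUP.
  case: (boolP (gain I N M x)) => g.
    by right; rewrite inE; apply/andP; split.
  by left; rewrite inE; apply/andP; split; [exact: (flip sM sN hq hM g)|].
apply: leq_trans (subset_leq_card sub) _.
apply: leq_trans (leq_card_setU _ _).1 _; rewrite leq_add2r.
exact: (leq_card_setU _ _).1.
Qed.

Lemma part_ge M N m : stable I M -> stable I N ->
  #|[set x | gain I M N x && (x \in Ml I M m)]|
  + #|[set x | gain I N M x && (x \in Ml I M m)]| + #|Zs M N m| <= #|Ml I M m|.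
Proof.
move=> sM sN.
set A := [set x | gain I M N x && (x \in Ml I M m)].
set B := [set x | gain I N M x && (x \in Ml I M m)].
have dAB : A :&: B = set0.
  apply/setP => x; rewrite !inE; apply/negP => /andP[/andP[g1 _] /andP[g2 _]].
  exact: gain_disj sM sN g1 g2.
have dZ : (A :|: B) :&: Zs M N m = set0.
  apply/setP => x; rewrite !inE; apply/negP => /andP[h /existsP[q /andP[/andP[_ hM] hN]]].
  case/orP: h => /andP[g _].
  - by rewrite (negbTE (gain_notin sM g hM)) in hN.
  - by rewrite (negbTE (gain_notin sN g hN)) in hM.
have sub : (A :|: B) :|: Zs M N m \subset Ml I M m.
  apply/subsetP => x; rewrite !inE => /orP[/orP[]/andP[_ ->]//|].
  by case/existsP => q /andP[/andP[/eqP e hM] _]; apply/existsP; exists q; rewrite e eqxx hM.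
have := subset_leq_card sub.
by rewrite cardsU dZ cards0 subn0 cardsU dAB cards0 subn0.
Qed.

Lemma half M N m : stable I M -> stable I N -> ~ Bp M N m ->
  #|[set x | gain I M N x && (x \in Ml I M m)]| + #|[set x | gain I N M x && (x \in Ml I N m)]|
  <= #|[set x | gain I M N x && (x \in Ml I N m)]| + #|[set x | gain I N M x && (x \in Ml I M m)]|.
Proof.
move=> sM sN nB.
have eb : #|[set x | gain I N M x && (x \in Ml I N m)]| <= #|[set x | gain I N M x && (x \in Ml I M m)]|.
  have := @LecS N M m predT sN sM (fun _ _ _ _ => erefl) (fun u r a b c _ => preA sM sN nB a b c).
  by rewrite !cardT.
case: (classic (Bp N M m)) => [[t [_ _ full _ _]]|nB2].
  have := part_ge m sM sN; have := part_le m sM sN; have := st_lcap sM m; lia.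
have ac : #|[set x | gain I M N x && (x \in Ml I M m)]| <= #|[set x | gain I M N x && (x \in Ml I N m)]|.
  have := @LecS M N m predT sM sN (fun _ _ _ _ => erefl) (fun u r a b c _ => preA sN sM nB2 a b c).
  by rewrite !cardT.
lia.
Qed.

Lemma loc M N m : stable I M -> stable I N ->
  #|[set x | gain I M N x && (x \in Ml I M m)]| + #|[set x | gain I N M x && (x \in Ml I N m)]|
  <= #|[set x | gain I M N x && (x \in Ml I N m)]| + #|[set x | gain I N M x && (x \in Ml I M m)]|.
Proof.
move=> sM sN; case: (classic (Bp M N m)) => h; last exact: half.
have nh : ~ Bp N M m by move=> h2; exact: Bp_excl h h2.
have := half sN sM nh; lia.
Qed.

End Aux3.

Section Aux4.
Variables (S P L : finType) (I : spa_instance S P L).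

Lemma strict M N s p p' l : stable I M -> stable I N ->
  (s, p) \in M -> (s, p') \in N -> p != p' -> lec I p = l -> lec I p' = l ->
  sprefers I s p p' ->
  (forall z, z \in Ml I M l -> z \notin Ml I N l -> ~~ lprefers I l s z) ->
  #|[set x | gain I M N x && (x \in Ml I M l)]| + #|[set x | gain I N M x && (x \in Ml I N l)]|
  < #|[set x | gain I M N x && (x \in Ml I N l)]| + #|[set x | gain I N M x && (x \in Ml I M l)]|.
Proof.
move=> sM sN sp sp' npp lp lp' pref Hneg.
have gs : gain I M N s.
  apply/existsP; exists p; rewrite sp /=; apply/forallP => q; apply/implyP => hq.
  by rewrite (st_uniq sN hq sp').
have sMl : s \in Ml I M l := Ml_in sp lp.
have sNl : s \in Ml I N l := Ml_in sp' lp'.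
pose H := fun x => lprefers I l x s.
have Hup : forall x w, H x -> lprefers I l w x -> H w.
  by move=> x w hx hw; exact: lpr_trans hw hx.
have split : forall Z : {set S * P},
  #|[set x | gain I M N x && (x \in Ml I Z l)]| =
  #|[set x | gain I M N x && H x && (x \in Ml I Z l)]| +
  #|[set x | gain I M N x && ~~ H x && (x \in Ml I Z l)]|.
  move=> Z; rewrite -(cardsID [set x | H x] [set x | gain I M N x && (x \in Ml I Z l)]).
  by congr (_ + _); apply: eq_card => x; rewrite !inE; case: (H x); case: (gain I M N x);
     rewrite ?andbT ?andbF.
have low : #|[set x | gain I M N x && ~~ H x && (x \in Ml I M l)]| <=
           #|[set x | gain I M N x && ~~ H x && (x \in Ml I N l)]|.
  apply: subset_leq_card; apply/subsetP => x; rewrite inE => /andP[/andP[g nh] xM].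
  have xM' : x \in Ml I M l := xM.
  rewrite inE g nh /=.
  case: (boolP (x \in Ml I N l)) => // xN.
  have hn := Hneg _ xM' xN.
  have nxs : x != s by apply: contraNneq xN => ->.
  case: (lpr_total (Ml_lpref sM xM') (Ml_lpref sM sMl) nxs) => h.
    by rewrite /H h in nh.
  by rewrite h in hn.
have pre : forall u r, (u, r) \in M -> lec I r = l -> gain I M N u -> H u ->
    #|Mp N r| = pcap I r /\ forall w, w \in Mp N r -> lprefers I l w u.
  move=> u r uM er gu hu.
  case: (noblock sN (st_acc sM uM) (gain_notin sM gu uM) (gain_pref sM gu uM))
    => [[h1 h2]|[_ _ h]]; first by rewrite -er.
  by exfalso; rewrite er in h; exact: lpr_asym (h _ sNl) hu.
have high : #|[set x | gain I M N x && H x && (x \in Ml I M l)]| <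
            #|[set x | gain I M N x && H x && (x \in Ml I N l)]|.
  rewrite (Ml_proj (fun x => gain I M N x && H x)) // (Ml_proj (fun x => gain I M N x && H x)) //.
  rewrite (bigD1 p) //= [X in _ < X](bigD1 p) //=.
  have rest : \sum_(r | r != p) #|[set x | gain I M N x && H x && ((lec I r == l) && ((x, r) \in M))]|
           <= \sum_(r | r != p) #|[set x | gain I M N x && H x && ((lec I r == l) && ((x, r) \in N))]|.
    by apply: leq_sum => r _; exact: (LecP sM sN Hup pre r).
  have [fullp prefp] : #|Mp N p| = pcap I p /\ forall w, w \in Mp N p -> lprefers I (lec I p) w s.
    case: (noblock sN (st_acc sM sp) (gain_notin sM gs sp) (gain_pref sM gs sp)) => // [[_ h _]].
    by rewrite lp sNl in h.
  have hHp : forall w, w \in Mp N p -> H w by move=> w /prefp; rewrite lp.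
  have hp := proj sM sN sp fullp prefp hHp.
  have lt1 : #|[set x | gain I M N x && H x && ((lec I p == l) && ((x, p) \in M))]| <
             #|[set x | ((x, p) \in M) && gain I M N x]|.
    apply: proper_card; apply/properP; split.
      by apply/subsetP => x; rewrite !inE => /andP[/andP[-> _] /andP[_ ->]].
    exists s; first by rewrite inE sp gs.
    by rewrite inE /H (negbTE (lpr_irr _ _ _)) andbF.
  have le2 : #|[set x | ((x, p) \in N) && gain I M N x && H x]| <=
             #|[set x | gain I M N x && H x && ((lec I p == l) && ((x, p) \in N))]|.
    by apply: subset_leq_card; apply/subsetP => x; rewrite !inE lp eqxx /= => /andP[/andP[-> ->] ->].
  rewrite -addSn; apply: leq_add; last exact: rest.
  exact: leq_trans lt1 (leq_trans hp le2).
have ac : #|[set x | gain I M N x && (x \in Ml I M l)]| < #|[set x | gain I M N x && (x \in Ml I N l)]|.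
  rewrite (split M) (split N); lia.
case: (classic (Bp I M N l)) => [[u [_ _ full _ _]]|nB].
  have := part_le l sN sM; have := part_ge l sN sM; have := st_lcap sN l; lia.
have eb : #|[set x | gain I N M x && (x \in Ml I N l)]| <= #|[set x | gain I N M x && (x \in Ml I M l)]|.
  have := @LecS _ _ _ I N M l predT sN sM (fun _ _ _ _ => erefl) (fun u r a b c _ => preA sM sN nB a b c).
  by rewrite !cardT.
lia.
Qed.

End Aux4.

Unset Implicit Arguments.

Theorem lemma4 (S P L : finType) (I : spa_instance S P L)
  (M M' : {set S * P}) (s : S) (p p' : P) (l : L) :
  stable I M -> stable I M' ->
  (s, p) \in M -> (s, p') \in M' -> p != p' ->
  lec I p = l -> lec I p' = l ->
  sprefers I s p p' ->
  exists2 z, z \in Ml I M l :\: Ml I M' l & lprefers I l s z.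
Proof.
move=> sM sN sp sp' npp lp lp' pref.
case: (classic (exists2 z, z \in Ml I M l :\: Ml I M' l & lprefers I l s z)) => // Hno.
exfalso.
have Hneg : forall z, z \in Ml I M l -> z \notin Ml I M' l -> ~~ lprefers I l s z.
  move=> z h1 h2; apply/negP => h3; apply: Hno; exists z => //.
  by rewrite in_setD h2 h1.
have Hl := strict sM sN sp sp' npp lp lp' pref Hneg.
have S1 : \sum_m (#|[set x | gain I M M' x && (x \in Ml I M m)]| + #|[set x | gain I M' M x && (x \in Ml I M' m)]|)
        < \sum_m (#|[set x | gain I M M' x && (x \in Ml I M' m)]| + #|[set x | gain I M' M x && (x \in Ml I M m)]|).
  rewrite (bigD1 l) //= [X in _ < X](bigD1 l) //=.
  have : \sum_(m | m != l) (#|[set x | gain I M M' x && (x \in Ml I M m)]| + #|[set x | gain I M' M x && (x \in Ml I M' m)]|)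
        <= \sum_(m | m != l) (#|[set x | gain I M M' x && (x \in Ml I M' m)]| + #|[set x | gain I M' M x && (x \in Ml I M m)]|).
    by apply: leq_sum => m _; exact: loc.
  lia.
rewrite !big_split /= in S1.
have e1 := @Ml_sum_eq _ _ _ I M (gain I M M') sM (fun x g => gain_Ml g).
have e2 := @Ml_sum_eq _ _ _ I M' (gain I M' M) sN (fun x g => gain_Ml g).
have e3 := @Ml_sum_le _ _ _ I M' (gain I M M') sN.
have e4 := @Ml_sum_le _ _ _ I M (gain I M' M) sM.
lia.
Qed.
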